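(* There exist a Cantor space $(X,d)$ and a homeomorphism $f$ of $X$ such that: (1) $X=\overline{Per(f)}$; (2) $f$ is equicontinuous; (3) $f$ has the periodic shadowing property; (4) $f$ does not have the strict periodic shadowing property; (5) $f^3$ has the strict periodic shadowing property.
   Context: A Cantor space is a compact metric space without isolated points that is totally disconnected. $Per(f)$ is the set of periodic points. Equicontinuous: for every $\epsilon>0$ there is $\delta>0$ with $d(x,y)\le\delta\Rightarrow\sup_{i\in\mathbb{Z}}d(f^i(x),f^i(y))\le\epsilon$. A $\delta$-cycle of a map $F$ is $(x_i)_{i=0}^m$, $m\ge1$, with $d(F(x_i),x_{i+1})\le\delta$ for $0\le i<m$ and $x_0=x_m$. $F$ has the periodic shadowing property if for every $\epsilon>0$ there is $\delta>0$ such that for every $\delta$-cycle $(x_i)_{i=0}^m$ of $F$ there is $p\in Per(F)$ with $d(x_i,F^i(p))\le\epsilon$ for $0\le i\le m$; $F$ has the strict periodic shadowing property if the same holds with $p$ required to satisfy $F^m(p)=p$. *)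

(* Defs.v *)
From Stdlib Require Import Reals List ZArith.
Open Scope R_scope.

Section Metric.
Context {X : Type} (d : X -> X -> R).

Definition is_metric : Prop :=
  (forall x y, 0 <= d x y) /\
  (forall x y, d x y = 0 <-> x = y) /\
  (forall x y, d x y = d y x) /\
  (forall x y z, d x z <= d x y + d y z).

Definition is_open (U : X -> Prop) : Prop :=
  forall x, U x -> exists e, 0 < e /\ forall y, d x y < e -> U y.

Definition compact_space : Prop :=
  forall (I : Type) (U : I -> X -> Prop),
    (forall i, is_open (U i)) -> (forall x, exists i, U i x) ->
    exists l : list I, forall x, exists i, In i l /\ U i x.

Definition no_isolated_points : Prop :=
  forall x e, 0 < e -> exists y, y <> x /\ d x y < e.

Definition connected_subset (A : X -> Prop) : Prop :=
  ~ exists U V, is_open U /\ is_open V /\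
      (forall x, A x -> U x \/ V x) /\
      (exists x, A x /\ U x) /\ (exists x, A x /\ V x) /\
      (forall x, A x -> U x -> V x -> False).

Definition totally_disconnected : Prop :=
  forall A, connected_subset A -> forall x y, A x -> A y -> x = y.

Definition cantor_space : Prop :=
  inhabited X /\ is_metric /\ compact_space /\ no_isolated_points /\
  totally_disconnected.

Definition continuous (f : X -> X) : Prop :=
  forall x e, 0 < e -> exists dl, 0 < dl /\ forall y, d x y < dl -> d (f x) (f y) < e.

Definition homeomorphism (f g : X -> X) : Prop :=
  (forall x, g (f x) = x) /\ (forall x, f (g x) = x) /\ continuous f /\ continuous g.

Definition periodic_point (f : X -> X) (p : X) : Prop :=
  exists n, (1 <= n)%nat /\ Nat.iter n f p = p.

Definition dense_periodic (f : X -> X) : Prop :=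
  forall x e, 0 < e -> exists p, periodic_point f p /\ d x p < e.

Definition iterZ (f g : X -> X) (i : Z) (x : X) : X :=
  match i with
  | Z0 => x
  | Zpos n => Nat.iter (Pos.to_nat n) f x
  | Zneg n => Nat.iter (Pos.to_nat n) g x
  end.

Definition equicontinuous (f g : X -> X) : Prop :=
  forall e, 0 < e -> exists dl, 0 < dl /\
    forall x y, d x y <= dl -> forall i : Z, d (iterZ f g i x) (iterZ f g i y) <= e.

Definition delta_cycle (F : X -> X) (dl : R) (xs : nat -> X) (m : nat) : Prop :=
  (1 <= m)%nat /\ (forall i, (i < m)%nat -> d (F (xs i)) (xs (S i)) <= dl) /\ xs 0%nat = xs m.

Definition periodic_shadowing (F : X -> X) : Prop :=
  forall e, 0 < e -> exists dl, 0 < dl /\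
    forall xs m, delta_cycle F dl xs m ->
      exists p, periodic_point F p /\
        forall i, (i <= m)%nat -> d (xs i) (Nat.iter i F p) <= e.

Definition strict_periodic_shadowing (F : X -> X) : Prop :=
  forall e, 0 < e -> exists dl, 0 < dl /\
    forall xs m, delta_cycle F dl xs m ->
      exists p, Nat.iter m F p = p /\
        forall i, (i <= m)%nat -> d (xs i) (Nat.iter i F p) <= e.

End Metric.

(* Main.v *)
Require Import Defs.
From Stdlib Require Import Reals List ZArith Lia Lra Classical ClassicalEpsilon FunctionalExtensionality Arith.

Inductive Sym := b0 | b1 | q0 | q1 | q2.
Definition Seq := nat -> Sym.
Definition rot (a:Sym) := match a with q0 => q1 | q1 => q2 | q2 => q0 | a => a end.
Definition rotn (c:nat) (a:Sym) := Nat.iter c rot a.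
Definition isStop (a:Sym) : Prop := match a with q0 | q1 | q2 => True | _ => False end.
Definition stl (x:Seq) : Seq := fun k => x (S k).
Definition scons (a:Sym) (t:Seq) : Seq := fun k => match k with O => a | S k' => t k' end.

Definition headF (c:nat) a := match a with b0 => b1 | b1 => b0 | s => rotn c s end.
Fixpoint hk (c k:nat) (x:Seq) : Sym := match k with
 | O => rotn c (x O)
 | S k' => match x O with b0 | b1 => hk c k' (stl x) | _ => x (S k') end end.
Definition h c x : Seq := fun k => hk c k x.
Fixpoint fk (c k:nat) (x:Seq) : Sym := match k with
 | O => headF c (x O)
 | S k' => match x O with b0 => h c (stl x) k' | b1 => fk c k' (stl x) | _ => x (S k') end end.
Definition F c x : Seq := fun k => fk c k x.
Definition headG (c:nat) a := match a with b0 => b1 | b1 => b0 | s => rotn (2*c)%nat s end.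
Fixpoint gk (c k:nat) (x:Seq) : Sym := match k with
 | O => headG c (x O)
 | S k' => match x O with b1 => h (2*c)%nat (stl x) k' | b0 => gk c k' (stl x) | _ => x (S k') end end.
Definition G c x : Seq := fun k => gk c k x.

Lemma h0 c x : h c x O = rotn c (x O). Proof. reflexivity. Qed.
Lemma hS c x k : h c x (S k) = match x O with b0 | b1 => h c (stl x) k | _ => x (S k) end.
Proof. reflexivity. Qed.
Lemma F0 c x : F c x O = headF c (x O). Proof. reflexivity. Qed.
Lemma FS c x k : F c x (S k) = match x O with b0 => h c (stl x) k | b1 => F c (stl x) k | _ => x (S k) end.
Proof. reflexivity. Qed.
Lemma G0 c x : G c x O = headG c (x O). Proof. reflexivity. Qed.
Lemma GS c x k : G c x (S k) = match x O with b1 => h (2*c)%nat (stl x) k | b0 => G c (stl x) k | _ => x (S k) end.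
Proof. reflexivity. Qed.
Global Opaque h F G.

Lemma rotn_bin c : forall a, ~ isStop a -> rotn c a = a.
Proof. induction c; intros a Ha; [reflexivity|]. change (rot (rotn c a) = a). rewrite IHc by exact Ha.
  destruct a; simpl in *; tauto. Qed.
Lemma rotn_add a b s : rotn a (rotn b s) = rotn (a+b) s.
Proof. unfold rotn. rewrite Nat.iter_add. reflexivity. Qed.
Lemma rotn3 q s : rotn (3*q) s = s.
Proof. induction q. reflexivity. replace (3 * S q)%nat with (3 + 3*q)%nat by lia.
  rewrite <- rotn_add, IHq. destruct s; reflexivity. Qed.
Lemma rotn_stop c s : isStop (rotn c s) <-> isStop s.
Proof. induction c. reflexivity. change (isStop (rot (rotn c s)) <-> isStop s). rewrite <- IHc.
  destruct (rotn c s); simpl; tauto. Qed.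

Lemma seq_eta x : x = scons (x O) (stl x).
Proof. apply functional_extensionality; intros [|k]; reflexivity. Qed.
Lemma tl_scons a t : stl (scons a t) = t. Proof. reflexivity. Qed.

Lemma tlF c x : stl (F c x) = match x O with b0 => h c (stl x) | b1 => F c (stl x) | _ => stl x end.
Proof. apply functional_extensionality; intro k. unfold stl at 1. rewrite FS. destruct (x O); reflexivity. Qed.
Lemma tlh c x : stl (h c x) = match x O with b0 | b1 => h c (stl x) | _ => stl x end.
Proof. apply functional_extensionality; intro k. unfold stl at 1. rewrite hS. destruct (x O); reflexivity. Qed.
Lemma tlG c x : stl (G c x) = match x O with b1 => h (2*c)%nat (stl x) | b0 => G c (stl x) | _ => stl x end.
Proof. apply functional_extensionality; intro k. unfold stl at 1. rewrite GS. destruct (x O); reflexivity. Qed.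

Ltac rs c s := let Hs := fresh in assert (Hs := proj2 (rotn_stop c s) I);
  destruct (rotn c s); simpl in Hs; try contradiction.
Ltac rb c s := rewrite (rotn_bin c s) by (simpl; tauto).

Lemma HH : forall k a b x, h a (h b x) k = h (a+b) x k.
Proof. induction k; intros a b x.
  - rewrite !h0, rotn_add; reflexivity.
  - rewrite !hS, h0, tlh. destruct (x O) eqn:E.
    + rb b b0. apply IHk.
    + rb b b1. apply IHk.
    + rs b q0; try rewrite hS, E; reflexivity.
    + rs b q1; try rewrite hS, E; reflexivity.
    + rs b q2; try rewrite hS, E; reflexivity.
Qed.

Lemma headF_stop c s : isStop s -> headF c s = rotn c s.
Proof. destruct s; simpl; tauto. Qed.
Lemma headG_stop c s : isStop s -> headG c s = rotn (2*c) s.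
Proof. destruct s; simpl; tauto. Qed.

Lemma FH : forall k a b x, F a (h b x) k = F (a+b) x k.
Proof. induction k; intros a b x.
  - rewrite !F0, h0. destruct (x O);
    try (rb b b0; reflexivity); try (rb b b1; reflexivity);
    rewrite (headF_stop a), rotn_add, headF_stop; simpl; try tauto; apply rotn_stop; simpl; tauto.
  - rewrite !FS, h0, tlh. destruct (x O) eqn:E.
    + rb b b0. apply HH.
    + rb b b1. apply IHk.
    + rs b q0; try rewrite hS, E; reflexivity.
    + rs b q1; try rewrite hS, E; reflexivity.
    + rs b q2; try rewrite hS, E; reflexivity.
Qed.
Lemma HF : forall k a b x, h b (F a x) k = F (a+b) x k.
Proof. induction k; intros a b x.
  - rewrite h0, !F0. destruct (x O); try (simpl; rb b b0; reflexivity); try (simpl; rb b b1; reflexivity);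
    rewrite !headF_stop, rotn_add, Nat.add_comm; simpl; tauto.
  - rewrite hS, !FS, F0, tlF. destruct (x O) eqn:E.
    + simpl. rewrite HH, Nat.add_comm; reflexivity.
    + simpl. apply IHk.
    + rewrite (headF_stop a q0 I). rs a q0; try rewrite FS, E; reflexivity.
    + rewrite (headF_stop a q1 I). rs a q1; try rewrite FS, E; reflexivity.
    + rewrite (headF_stop a q2 I). rs a q2; try rewrite FS, E; reflexivity.
Qed.

Lemma h3 : forall k x, h 3 x k = x k.
Proof. induction k; intro x.
  - rewrite h0. apply (rotn3 1).
  - rewrite hS. destruct (x O); auto. Qed.

Lemma FG : forall k x, F 1 (G 1 x) k = x k.
Proof. induction k; intro x.
  - rewrite F0, G0. destruct (x O); reflexivity.
  - rewrite FS, G0, tlG. destruct (x O) eqn:E; simpl; try (rewrite GS, E; reflexivity).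
    + exact (IHk (stl x)).
    + rewrite HH. exact (h3 k (stl x)).
Qed.
Lemma GF : forall k x, G 1 (F 1 x) k = x k.
Proof. induction k; intro x.
  - rewrite G0, F0. destruct (x O); reflexivity.
  - rewrite GS, F0, tlF. destruct (x O) eqn:E; simpl; try (rewrite FS, E; reflexivity).
    + rewrite HH. exact (h3 k (stl x)).
    + exact (IHk (stl x)).
Qed.

Definition bin (a:Sym) : Prop := a = b0 \/ a = b1.
Lemma bin_not_stop a : bin a <-> ~ isStop a.
Proof. destruct a; unfold bin; simpl; intuition discriminate. Qed.

Lemma F2 c b t : bin b -> F c (F c (scons b t)) = scons b (F (c+c) t).
Proof. intros [Hb|Hb]; subst; apply functional_extensionality; intros [|k].
  - reflexivity.
  - rewrite FS, F0, tlF. simpl. apply FH.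
  - reflexivity.
  - rewrite FS, F0, tlF. simpl. apply HF.
Qed.

Lemma IC c b t n : bin b -> Nat.iter (2*n) (F c) (scons b t) = scons b (Nat.iter n (F (c+c)) t).
Proof. intro Hb. induction n. reflexivity.
  replace (2 * S n)%nat with (S (S (2*n))) by lia. simpl. simpl in IHn. rewrite IHn. now apply F2. Qed.

Lemma F_stop c x : isStop (x O) -> F c x = scons (rotn c (x O)) (stl x).
Proof. intro Hs. apply functional_extensionality; intros [|k].
  - rewrite F0, headF_stop; auto.
  - rewrite FS. destruct (x O); simpl in Hs; try contradiction; reflexivity. Qed.

Lemma iter_F_stop c x n : isStop (x O) -> Nat.iter n (F c) x = scons (rotn (n*c) (x O)) (stl x).
Proof. intro Hs. induction n. simpl. apply seq_eta.
  replace (S n * c)%nat with (c + n*c)%nat by lia.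
  simpl. rewrite IHn, F_stop. simpl. rewrite rotn_add. reflexivity.
  simpl. apply rotn_stop; auto. Qed.

Lemma PER : forall j c p, (exists k, (k <= j)%nat /\ isStop (p k)) -> Nat.iter (3*2^j) (F c) p = p.
Proof. induction j; intros c p [k [Hk Hs]].
  - assert (k = O) by lia. subst. rewrite iter_F_stop by auto.
    replace (3 * 2 ^ 0 * c)%nat with (3*c)%nat by (simpl; lia). rewrite rotn3. symmetry; apply seq_eta.
  - destruct (classic (isStop (p O))) as [H0|H0].
    + rewrite iter_F_stop by auto.
      replace (3 * 2 ^ S j * c)%nat with (3*(2^S j*c))%nat by lia. rewrite rotn3. symmetry; apply seq_eta.
    + destruct k. contradiction.
      rewrite (seq_eta p). replace (3 * 2 ^ S j)%nat with (2 * (3*2^j))%nat by (simpl; lia).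
      rewrite IC by (apply bin_not_stop; auto). rewrite IHj. reflexivity.
      exists k. split. lia. exact Hs.
Qed.

Lemma SPh : forall k c x, isStop (h c x k) <-> isStop (x k).
Proof. induction k; intros c x. rewrite h0; apply rotn_stop.
  rewrite hS. destruct (x O); try tauto; exact (IHk c (stl x)). Qed.
Lemma SP : forall k c x, isStop (F c x k) <-> isStop (x k).
Proof. induction k; intros c x. rewrite F0. destruct (x O); simpl; try tauto; rewrite rotn_stop; simpl; tauto.
  rewrite FS. destruct (x O); try tauto. exact (SPh k c (stl x)). exact (IHk c (stl x)). Qed.

Lemma SH : forall j c x, (forall k, (k<j)%nat -> ~ isStop (x k)) -> h c x j = rotn c (x j).
Proof. induction j; intros c x Hb. apply h0.
  rewrite hS. assert (H0 := Hb O ltac:(lia)). destruct (x O); simpl in H0; try tauto;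
  apply (IHj c (stl x)); intros k Hk; apply (Hb (S k)); lia. Qed.
Lemma SF : forall j c x, (forall k, (k<j)%nat -> ~ isStop (x k)) -> isStop (x j) -> F c x j = rotn c (x j).
Proof. induction j; intros c x Hb Hs. rewrite F0; apply headF_stop; auto.
  rewrite FS. assert (H0 := Hb O ltac:(lia)). destruct (x O); simpl in H0; try tauto.
  apply (SH j c (stl x)). intros k Hk; apply (Hb (S k)); lia.
  apply (IHj c (stl x)); auto. intros k Hk; apply (Hb (S k)); lia. Qed.



Lemma SP_iter : forall n k c x, isStop (Nat.iter n (F c) x k) <-> isStop (x k).
Proof. induction n; intros. reflexivity. simpl. rewrite SP. apply IHn. Qed.

Lemma SF_iter : forall n j x, (forall k, (k<j)%nat -> ~ isStop (x k)) -> isStop (x j) ->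
  Nat.iter n (F 1) x j = rotn n (x j).
Proof. induction n; intros j x Hb Hs. reflexivity.
  simpl. rewrite SF. rewrite IHn; auto.
  intros k Hk. rewrite SP_iter. auto. rewrite SP_iter. auto. Qed.

Lemma TH : forall j c x k, isStop (x j) -> (j < k)%nat -> h c x k = x k.
Proof. induction j; intros c x k Hs Hk; destruct k; try lia.
  - rewrite hS. destruct (x O); simpl in Hs; tauto.
  - rewrite hS. destruct (x O); auto; apply (IHj c (stl x)); auto; lia. Qed.
Lemma TF : forall j c x k, isStop (x j) -> (j < k)%nat -> F c x k = x k.
Proof. induction j; intros c x k Hs Hk; destruct k; try lia.
  - rewrite FS. destruct (x O); simpl in Hs; tauto.
  - rewrite FS. destruct (x O); auto. apply (TH j c (stl x)); auto; lia. apply (IHj c (stl x)); auto; lia. Qed.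
Lemma TF_iter : forall n j c x k, isStop (x j) -> (j < k)%nat -> Nat.iter n (F c) x k = x k.
Proof. induction n; intros. reflexivity. simpl. rewrite (TF j). apply (IHn j); auto.
  rewrite SP_iter; auto. auto. Qed.

Lemma NP : forall K c x, (forall k, (k <= K)%nat -> ~ isStop (x k)) -> Nat.iter (2^K) (F c) x K <> x K.
Proof. induction K; intros c x Hb.
  - simpl. rewrite F0. assert (H0 := Hb O ltac:(lia)). destruct (x O); simpl in *; try tauto; discriminate.
  - rewrite (seq_eta x). simpl (2^S K)%nat. rewrite Nat.add_0_r.
    replace (2^K + 2^K)%nat with (2*2^K)%nat by lia.
    rewrite IC. simpl. apply (IHK (c+c)%nat (stl x)). intros k Hk. apply (Hb (S k)); lia.
    apply bin_not_stop, Hb; lia. Qed.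

Definition agree (n:nat) (x y : Seq) := forall k, (k < n)%nat -> x k = y k.

Lemma AGK : forall K c x, (forall k, (k < K)%nat -> ~ isStop (x k)) -> agree K (Nat.iter (2^K) (F c) x) x.
Proof. induction K; intros c x Hb. intros k Hk; lia.
  rewrite (seq_eta x). simpl (2^S K)%nat. rewrite Nat.add_0_r.
  replace (2^K + 2^K)%nat with (2*2^K)%nat by lia.
  rewrite IC. intros [|k] Hk. reflexivity. simpl. apply (IHK (c+c)%nat (stl x)). intros i Hi. apply (Hb (S i)); lia. lia.
  apply bin_not_stop, Hb; lia. Qed.

Lemma agree_h : forall n c x y, agree n x y -> agree n (h c x) (h c y).
Proof. induction n; intros c x y H k Hk. lia. destruct k.
  rewrite !h0, (H O); auto; lia.
  rewrite !hS, (H O) by lia. destruct (y O); try (apply H; lia);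
  apply (IHn c (stl x) (stl y)); try lia; intros i Hi; apply (H (S i)); lia. Qed.
Lemma agree_F : forall n c x y, agree n x y -> agree n (F c x) (F c y).
Proof. induction n; intros c x y H k Hk. lia. destruct k.
  rewrite !F0, (H O); auto; lia.
  rewrite !FS, (H O) by lia. destruct (y O); try (apply H; lia).
  apply (agree_h n c (stl x) (stl y)); try lia; intros i Hi; apply (H (S i)); lia.
  apply (IHn c (stl x) (stl y)); try lia; intros i Hi; apply (H (S i)); lia. Qed.
Lemma agree_G : forall n c x y, agree n x y -> agree n (G c x) (G c y).
Proof. induction n; intros c x y H k Hk. lia. destruct k.
  rewrite !G0, (H O); auto; lia.
  rewrite !GS, (H O) by lia. destruct (y O); try (apply H; lia).
  apply (IHn c (stl x) (stl y)); try lia; intros i Hi; apply (H (S i)); lia.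
  apply (agree_h n (2*c)%nat (stl x) (stl y)); try lia; intros i Hi; apply (H (S i)); lia. Qed.
Lemma agree_iter : forall f, (forall n x y, agree n x y -> agree n (f x) (f y)) ->
  forall m n x y, agree n x y -> agree n (Nat.iter m f x) (Nat.iter m f y).
Proof. intros f Hf m; induction m; intros; simpl; auto. Qed.
Open Scope R_scope.

Lemma first_diff (x y : Seq) : x <> y -> exists n, x n <> y n /\ agree n x y.
Proof. intro Hne.
  assert (exists k, x k <> y k) as [k Hk].
  { apply not_all_ex_not. intro H. apply Hne. apply functional_extensionality. exact H. }
  revert Hk. induction k as [k IH] using (well_founded_induction lt_wf). intro Hk.
  destruct (classic (agree k x y)) as [Ha|Ha]. exists k; auto.
  apply not_all_ex_not in Ha as [j Hj].
  apply (IH j). apply NNPP; intro; apply Hj; intro; lia.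
  intro E. apply Hj. intro; exact E. Qed.

Definition fd (x y : Seq) : nat :=
  match excluded_middle_informative (x = y) with
  | left _ => O
  | right H => proj1_sig (constructive_indefinite_description _ (first_diff x y H)) end.
Definition dd (x y : Seq) : R :=
  match excluded_middle_informative (x = y) with
  | left _ => 0 | right _ => (/2)^(fd x y) end.

Lemma fd_spec x y : x <> y -> x (fd x y) <> y (fd x y) /\ agree (fd x y) x y.
Proof. intro H. unfold fd. case excluded_middle_informative; intro n. contradiction.
  exact (proj2_sig (constructive_indefinite_description _ (first_diff x y n))). Qed.
Lemma dd_eq x : dd x x = 0.
Proof. unfold dd. destruct (excluded_middle_informative (x = x)); tauto. Qed.
Lemma dd_neq x y : x <> y -> dd x y = (/2)^(fd x y).
Proof. intro H. unfold dd. destruct (excluded_middle_informative (x = y)); tauto. Qed.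

Lemma half_pos n : 0 < (/2)^n.
Proof. apply pow_lt. lra. Qed.
Lemma half_lt m n : (m < n)%nat -> (/2)^n < (/2)^m.
Proof. revert m. induction n; intros m H. lia. destruct (Nat.eq_dec m n).
  rewrite e. simpl. assert (0 < (/2)^n) by apply half_pos. lra.
  assert ((/2)^(S n) < (/2)^n). { simpl. assert (0 < (/2)^n) by apply half_pos. lra. }
  assert ((/2)^n < (/2)^m) by (apply IHn; lia). lra. Qed.
Lemma half_le_iff m n : (/2)^n <= (/2)^m <-> (m <= n)%nat.
Proof. split; intro H.
  - destruct (le_lt_dec m n); auto. apply half_lt in l. lra.
  - destruct (Nat.eq_dec m n). subst; lra. left; apply half_lt; lia. Qed.
Lemma half_lt_iff m n : (/2)^n < (/2)^m <-> (m < n)%nat.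
Proof. split; intro H.
  - destruct (le_lt_dec n m); auto. apply half_le_iff in l. lra.
  - apply half_lt; auto. Qed.

Lemma agree_le n x y : x <> y -> (agree n x y <-> (n <= fd x y)%nat).
Proof. intro H. destruct (fd_spec x y H) as [H1 H2]. split; intro Ha.
  - destruct (le_lt_dec n (fd x y)); auto. exfalso; apply H1, Ha; auto.
  - intros k Hk. apply H2. lia. Qed.

Lemma dd_le n x y : dd x y <= (/2)^n <-> agree n x y.
Proof. destruct (classic (x = y)) as [E|E].
  - subst. rewrite dd_eq. split; intro. intros k _; reflexivity. left; apply half_pos.
  - rewrite dd_neq, agree_le, half_le_iff by auto. tauto. Qed.
Lemma dd_lt n x y : dd x y < (/2)^n <-> agree (S n) x y.
Proof. destruct (classic (x = y)) as [E|E].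
  - subst. rewrite dd_eq. split; intro. intros k _; reflexivity. apply half_pos.
  - rewrite dd_neq, agree_le, half_lt_iff by auto. lia. Qed.

Lemma dd_nonneg x y : 0 <= dd x y.
Proof. destruct (classic (x = y)) as [E|E]. subst; rewrite dd_eq; lra.
  rewrite dd_neq by auto. left; apply half_pos. Qed.

Lemma agree_sym n x y : agree n x y -> agree n y x.
Proof. intros H k Hk; symmetry; auto. Qed.
Lemma agree_trans n x y z : agree n x y -> agree n y z -> agree n x z.
Proof. intros H1 H2 k Hk; rewrite H1; auto. Qed.

Lemma dd_sym x y : dd x y = dd y x.
Proof. destruct (classic (x = y)) as [E|E]. subst; auto.
  rewrite !dd_neq by auto. f_equal.
  assert (A1 := fd_spec x y E). assert (A2 := fd_spec y x (not_eq_sym E)).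
  destruct A1 as [P1 Q1], A2 as [P2 Q2].
  destruct (lt_eq_lt_dec (fd x y) (fd y x)) as [[L|L]|L]; auto.
  exfalso; apply P1; symmetry; apply Q2; auto.
  exfalso; apply P2; symmetry; apply Q1; auto. Qed.

Lemma dd_metric : is_metric dd.
Proof. split; [|split; [|split]].
  - apply dd_nonneg.
  - intros x y; split; intro H. destruct (classic (x = y)); auto. rewrite dd_neq in H by auto.
    assert (0 < (/2)^fd x y) by apply half_pos. lra. subst; apply dd_eq.
  - apply dd_sym.
  - intros x y z. destruct (classic (x = z)) as [E|E].
    subst; rewrite dd_eq; assert (0 <= dd z y) by apply dd_nonneg; assert (0 <= dd y z) by apply dd_nonneg; lra.
    destruct (fd_spec x z E) as [P Q]. rewrite dd_neq by auto.
    destruct (classic (agree (S (fd x z)) x y)) as [A1|A1].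
    + destruct (classic (agree (S (fd x z)) y z)) as [A2|A2].
      * exfalso. apply P. apply (agree_trans _ _ _ _ A1 A2). lia.
      * rewrite <- dd_lt in A2. assert (0 <= dd x y) by apply dd_nonneg. lra.
    + rewrite <- dd_lt in A1. assert (0 <= dd y z) by apply dd_nonneg. lra.
Qed.

Lemma small e : 0 < e -> exists n, (/2)^n < e.
Proof. intro He. destruct (pow_lt_1_zero (/2) ltac:(rewrite Rabs_pos_eq; lra) e He) as [N HN].
  exists N. specialize (HN N (le_n _)). rewrite Rabs_pos_eq in HN; auto. left; apply half_pos. Qed.
Open Scope R_scope.

Definition upd (z : Seq) (n : nat) (a : Sym) : Seq := fun k => if Nat.eqb k n then a else z k.

Definition FC {I : Type} (U : I -> Seq -> Prop) (S : Seq -> Prop) := exists l : list I, forall x, S x -> exists i, In i l /\ U i x.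
Definition cyl z n := fun x => agree n x z.

Lemma split_cyl {I : Type} (U : I -> Seq -> Prop) z n : ~ FC U (cyl z n) -> exists a, ~ FC U (cyl (upd z n a) (S n)).
Proof. intro H. apply NNPP. intro H2. apply H.
  assert (forall a, FC U (cyl (upd z n a) (S n))) as Hall.
  { intro a. apply NNPP. intro H3. apply H2. exists a; auto. }
  destruct (Hall b0) as [l0 H0], (Hall b1) as [l1 H1], (Hall q0) as [l2 Hq0],
    (Hall q1) as [l3 Hq1], (Hall q2) as [l4 Hq2].
  exists (l0 ++ l1 ++ l2 ++ l3 ++ l4). intros x Hx.
  assert (Hc : cyl (upd z n (x n)) (S n) x).
  { intros k Hk. unfold upd. destruct (Nat.eqb_spec k n). subst; auto. apply Hx; lia. }
  destruct (x n); [destruct (H0 x Hc) as [i [Hi Ui]] | destruct (H1 x Hc) as [i [Hi Ui]]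
    | destruct (Hq0 x Hc) as [i [Hi Ui]] | destruct (Hq1 x Hc) as [i [Hi Ui]] | destruct (Hq2 x Hc) as [i [Hi Ui]]];
  exists i; split; auto; rewrite !in_app_iff; tauto. Qed.

Definition next {I : Type} (U : I -> Seq -> Prop) z n : Sym :=
  match excluded_middle_informative (exists a, ~ FC U (cyl (upd z n a) (S n))) with
  | left H => proj1_sig (constructive_indefinite_description _ H) | right _ => b0 end.
Fixpoint zs {I : Type} (U : I -> Seq -> Prop) n : Seq := match n with O => fun _ => b0 | S n => upd (zs U n) n (next U (zs U n) n) end.

Lemma zs_inv {I : Type} (U : I -> Seq -> Prop) : ~ FC U (fun _ => True) -> forall n, ~ FC U (cyl (zs U n) n).
Proof. intros H0 n. induction n.
  - intros [l Hl]. apply H0. exists l. intros x _. apply Hl. intros k Hk; lia.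
  - simpl. unfold next. destruct (excluded_middle_informative _) as [e|e].
    + exact (proj2_sig (constructive_indefinite_description _ e)).
    + exfalso. apply e. apply split_cyl; auto. Qed.

Lemma zs_stable {I : Type} (U : I -> Seq -> Prop) : forall m n k, (k < n)%nat -> (n <= m)%nat -> zs U m k = zs U n k.
Proof. induction m; intros n k Hk Hn. assert (n = O) by lia. subst; lia.
  destruct (Nat.eq_dec n (S m)). subst; auto.
  simpl. unfold upd. destruct (Nat.eqb_spec k m). lia. apply IHm; lia. Qed.

Lemma compact_dd {I : Type} (U : I -> Seq -> Prop) : (forall i, is_open dd (U i)) -> (forall x, exists i, U i x) ->
  exists l : list I, forall x, exists i, In i l /\ U i x.
Proof. intros Ho Hc. apply NNPP. intro Hn.
  assert (H0 : ~ FC U (fun _ => True)).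
  { intros [l Hl]. apply Hn. exists l. intro x. apply Hl; auto. }
  set (w := fun k => zs U (S k) k).
  assert (Hw : forall n, agree n w (zs U n)).
  { intros n k Hk. unfold w. symmetry. apply zs_stable; lia. }
  destruct (Hc w) as [i Hi]. destruct (Ho i w Hi) as [e [He Hb]].
  destruct (small e He) as [n Hn2].
  apply (zs_inv U H0 (S n)). exists (i :: nil). intros x Hx. exists i. split. left; auto.
  apply Hb. apply Rlt_trans with ((/2)^n); auto. apply dd_lt.
  apply agree_trans with (zs U (S n)); auto. apply agree_sym; auto. Qed.

Definition other (a : Sym) := match a with b0 => b1 | _ => b0 end.

Lemma cantor : cantor_space dd.
Proof. split; [|split; [|split; [|split]]].
  - constructor. exact (fun _ => b0).
  - apply dd_metric.
  - intros I U. apply (compact_dd U).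
  - intros x e He. destruct (small e He) as [n Hn].
    exists (upd x n (other (x n))). split.
    + intro E. assert (E2 := f_equal (fun z => z n) E). simpl in E2. unfold upd in E2.
      rewrite Nat.eqb_refl in E2. destruct (x n); discriminate.
    + apply Rle_lt_trans with ((/2)^n); auto. apply dd_le. intros k Hk. unfold upd.
      destruct (Nat.eqb_spec k n). lia. auto.
  - intros A HA x y Ax Ay. apply NNPP. intro Hne.
    destruct (first_diff x y Hne) as [n [Hn _]].
    apply HA. exists (fun z => agree (S n) z x), (fun z => ~ agree (S n) z x).
    split; [|split; [|split; [|split; [|split]]]].
    + intros z Hz. exists ((/2)^n). split. apply half_pos. intros w Hw. apply dd_lt in Hw.
      apply agree_trans with z; auto. apply agree_sym; auto.
    + intros z Hz. exists ((/2)^n). split. apply half_pos. intros w Hw Hw2. apply dd_lt in Hw.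
      apply Hz. apply agree_trans with w; auto.
    + intros z _. apply classic.
    + exists x. split; auto. intros k _; reflexivity.
    + exists y. split; auto. intro H. apply Hn. symmetry. apply H. lia.
    + intros z _ H1 H2; auto.
Qed.
Open Scope R_scope.

Definition trunc (x : Seq) (n : nat) : Seq := fun k => if Nat.ltb k n then x k else q0.

Lemma trunc_agree x n : agree n (trunc x n) x.
Proof. intros k Hk. unfold trunc. destruct (Nat.ltb_spec k n); auto; lia. Qed.
Lemma trunc_per x n c : Nat.iter (3*2^n) (F c) (trunc x n) = trunc x n.
Proof. apply PER. exists n. split. lia. unfold trunc. destruct (Nat.ltb_spec n n). lia. exact I. Qed.
Lemma pow2_pos n : (1 <= 3*2^n)%nat.
Proof. pose proof (Nat.pow_nonzero 2 n ltac:(lia)). lia. Qed.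

Lemma shadow (f : Seq -> Seq) (Hf : forall n x y, agree n x y -> agree n (f x) (f y))
  n xs m p : (forall i, (i < m)%nat -> agree n (f (xs i)) (xs (S i))) -> agree n p (xs O) ->
  forall i, (i <= m)%nat -> agree n (Nat.iter i f p) (xs i).
Proof. intros Hc Hp i. induction i; intro Hi. auto.
  simpl. apply agree_trans with (f (xs i)). apply Hf, IHi; lia. apply Hc; lia. Qed.

Lemma iter_iter (f : Seq -> Seq) a m x : Nat.iter m (Nat.iter a f) x = Nat.iter (a*m) f x.
Proof. induction m. rewrite Nat.mul_0_r; reflexivity.
  replace (a * S m)%nat with (a + a*m)%nat by lia. rewrite Nat.iter_add. simpl. rewrite IHm. reflexivity. Qed.

Lemma rot_pow2 K : (forall s, rotn (2^K) s = rot s) \/ (forall s, rotn (2^K) s = rot (rot s)).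
Proof. induction K. left; reflexivity.
  replace (2^S K)%nat with (2^K + 2^K)%nat by (simpl; lia).
  destruct IHK as [H|H]; [right|left]; intro s; rewrite <- rotn_add, !H; auto.
  destruct s; reflexivity. Qed.
Lemma rot_pow2_ne K s : isStop s -> rotn (2^K) s <> s.
Proof. intro Hs. destruct (rot_pow2 K) as [H|H]; rewrite H; destruct s; simpl in *; try tauto; discriminate. Qed.

Lemma first_stop (p : Seq) j : isStop (p j) -> exists j', isStop (p j') /\ (j' <= j)%nat /\ forall k, (k < j')%nat -> ~ isStop (p k).
Proof. induction j as [j IH] using (well_founded_induction lt_wf). intro Hj.
  destruct (classic (forall k, (k < j)%nat -> ~ isStop (p k))) as [H|H]. exists j; auto.
  apply not_all_ex_not in H as [k Hk]. apply imply_to_and in Hk as [Hk1 Hk2]. apply NNPP in Hk2.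
  destruct (IH k Hk1 Hk2) as [j' [A [B C]]]. exists j'. split; auto. split; auto. lia. Qed.

Lemma noFix K p : Nat.iter (2^K) (F 1) p <> p.
Proof. intro E. destruct (classic (exists j, (j <= K)%nat /\ isStop (p j))) as [[j [_ Hj]]|Hn].
  - destruct (first_stop p j Hj) as [j' [A [_ C]]].
    assert (E2 := f_equal (fun z => z j') E). simpl in E2. rewrite SF_iter in E2 by auto.
    exact (rot_pow2_ne K _ A E2).
  - apply (NP K 1 p). intros k Hk Hs. apply Hn. exists k; auto. rewrite E; reflexivity. Qed.

Theorem mainTheorem13 :
  exists (X : Type) (d : X -> X -> R) (f g : X -> X),
    cantor_space d /\ homeomorphism d f g /\
    dense_periodic d f /\
    equicontinuous d f g /\
    periodic_shadowing d f /\
    ~ strict_periodic_shadowing d f /\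
    strict_periodic_shadowing d (Nat.iter 3 f).
Proof.
  exists Seq, dd, (F 1), (G 1).
  split; [exact cantor|]. split; [|split; [|split; [|split; [|split]]]].
  - split; [|split; [|split]].
    + intro x. apply functional_extensionality. intro k. apply GF.
    + intro x. apply functional_extensionality. intro k. apply FG.
    + intros x e He. destruct (small e He) as [n Hn]. exists ((/2)^n). split. apply half_pos.
      intros y Hy. apply dd_lt in Hy. apply Rlt_trans with ((/2)^n); auto. apply dd_lt. apply agree_F; auto.
    + intros x e He. destruct (small e He) as [n Hn]. exists ((/2)^n). split. apply half_pos.
      intros y Hy. apply dd_lt in Hy. apply Rlt_trans with ((/2)^n); auto. apply dd_lt. apply agree_G; auto.
  - intros x e He. destruct (small e He) as [n Hn]. exists (trunc x n). split.
    + exists (3*2^n)%nat. split. apply pow2_pos. apply trunc_per.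
    + apply Rle_lt_trans with ((/2)^n); auto. apply dd_le. apply agree_sym, trunc_agree.
  - intros e He. destruct (small e He) as [n Hn]. exists ((/2)^n). split. apply half_pos.
    intros x y Hxy i. apply dd_le in Hxy. left. apply Rle_lt_trans with ((/2)^n); auto. apply dd_le.
    destruct i; simpl; auto; apply agree_iter; auto; intros; first [apply agree_F; auto | apply agree_G; auto].
  - intros e He. destruct (small e He) as [n Hn]. exists ((/2)^n). split. apply half_pos.
    intros xs m [Hm [Hc Hx]]. exists (trunc (xs O) n). split.
    + exists (3*2^n)%nat. split. apply pow2_pos. apply trunc_per.
    + intros i Hi. left. apply Rle_lt_trans with ((/2)^n); auto. apply dd_le. apply agree_sym.
      apply (shadow (F 1) (fun n x y H => agree_F n 1 x y H) n xs m); auto.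
      intros j Hj. apply dd_le. apply Hc; auto. apply trunc_agree.
  - intro H. destruct (H 1 ltac:(lra)) as [dl [Hdl H2]].
    destruct (small dl Hdl) as [K HK]. set (m := (2^K)%nat).
    assert (Hm : (1 <= m)%nat) by (pose proof (Nat.pow_nonzero 2 K ltac:(lia)); unfold m; lia).
    set (w := fun _ : nat => b0).
    set (xs := fun i => if Nat.eqb i m then w else Nat.iter i (F 1) w).
    destruct (H2 xs m) as [p [Hp _]].
    + split; [auto|split].
      * intros i Hi. unfold xs. destruct (Nat.eqb_spec i m). lia.
        destruct (Nat.eqb_spec (S i) m).
        -- left. apply Rle_lt_trans with ((/2)^K); auto. apply dd_le.
           change (F 1 (Nat.iter i (F 1) w)) with (Nat.iter (S i) (F 1) w). rewrite e.
           apply AGK. intros k _; simpl; auto.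
        -- change (F 1 (Nat.iter i (F 1) w)) with (Nat.iter (S i) (F 1) w). rewrite dd_eq. lra.
      * unfold xs. rewrite Nat.eqb_refl. destruct (Nat.eqb_spec 0 m). lia. reflexivity.
    + exact (noFix K p Hp).
  - intros e He. destruct (small e He) as [n Hn]. exists ((/2)^n). split. apply half_pos.
    intros xs m [Hm [Hc Hx]].
    assert (HF3 : forall n x y, agree n x y -> agree n (Nat.iter 3 (F 1) x) (Nat.iter 3 (F 1) y)).
    { intros; apply agree_iter; auto. intros; apply agree_F; auto. }
    assert (Hc' : forall i, (i < m)%nat -> agree n (Nat.iter 3 (F 1) (xs i)) (xs (S i))).
    { intros i Hi. apply dd_le, Hc, Hi. }
    assert (Hgen : forall p, agree n p (xs O) ->
       (forall k, (n <= k)%nat -> Nat.iter (3*m) (F 1) p k = p k) ->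
       exists p0, Nat.iter m (Nat.iter 3 (F 1)) p0 = p0 /\
        (forall i, (i <= m)%nat -> dd (xs i) (Nat.iter i (Nat.iter 3 (F 1)) p0) <= e)).
    { intros p Hp Ht. exists p. split.
      - rewrite iter_iter. apply functional_extensionality. intro k.
        destruct (le_lt_dec n k) as [L|L]. apply Ht; auto.
        assert (A := shadow _ HF3 n xs m p Hc' Hp m (le_n _)). rewrite <- Hx in A.
        rewrite iter_iter in A. rewrite (A k L). symmetry; apply Hp; auto.
      - intros i Hi. left. apply Rle_lt_trans with ((/2)^n); auto. apply dd_le. apply agree_sym.
        apply (shadow _ HF3 n xs m p Hc' Hp i Hi). }
    destruct (classic (exists j, (j < n)%nat /\ isStop (xs O j))) as [[j [Hj Hs]]|Hns].
    + apply (Hgen (xs O)). intros k _; reflexivity.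
      intros k Hk. apply (TF_iter _ j); auto. lia.
    + apply (Hgen (trunc (xs O) n)). apply trunc_agree.
      intros k Hk. destruct (Nat.eq_dec k n).
      * subst k. rewrite SF_iter.
        -- unfold trunc. destruct (Nat.ltb_spec n n). lia. apply rotn3.
        -- intros k Hk2 Hs. apply Hns. exists k. split; auto. unfold trunc in Hs.
           destruct (Nat.ltb_spec k n); auto; lia.
        -- unfold trunc. destruct (Nat.ltb_spec n n). lia. exact I.
      * apply (TF_iter _ n). unfold trunc. destruct (Nat.ltb_spec n n). lia. exact I. lia.
Qed.
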